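(* Let $n\geq 3$ and let $\ast_n$ be the star graph. Then for every subgroup $G$ of $Homeo(\ast_n)$ we have $h(G,\ast_n)\geq 2$; moreover $h(Homeo(\ast_n),\ast_n)=2$.
   Context: For $n\geq 3$, the star graph $\ast_n$ is the topological graph with $n+1$ vertices $0,1,\ldots,n$ and $n$ edges $[0,1],[0,2],\ldots,[0,n]$, i.e. the union of $n$ arcs, the $i$-th having end points $0$ and $i$, any two of which meet only at the common end point $0$. For a topological space $A$, $Homeo(A)$ denotes the group of all homeomorphisms $A\to A$ under composition. For a subgroup $G$ of $Homeo(A)$ (acting by $gx=g(x)$), a nonempty subset $Y\subseteq A$ is invariant if $g(y)\in Y$ for all $g\in G$, $y\in Y$. The height of $(G,A)$ is $h(G,A)=\sup\{n\geq 0:$ there exist distinct closed invariant subsets $Y_0\subset Y_1\subset\cdots\subset Y_n=A\}$ (possibly $+\infty$). *)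

(* Defs.v *)
From HB Require Import structures.
From mathcomp Require Import all_boot all_order all_algebra.
From mathcomp Require Import all_classical all_reals all_analysis.
Set Implicit Arguments. Unset Strict Implicit. Unset Printing Implicit Defensive.
Import Order.TTheory GRing.Theory Num.Theory.
Import numFieldNormedType.Exports.
Local Open Scope classical_set_scope.
Local Open Scope ring_scope.

(* The star graph *_n, realized concretely in R^n (row vectors) as the union
   of the n segments [0, e_i], i < n, with the subspace topology.  The
   vertex 0 is the origin and vertex i+1 is the basis vector e_i. *)
Definition star_set (R : realType) (n : nat) : set 'rV[R]_n :=
  [set x | exists (i : 'I_n) (t : R), 0 <= t <= 1 /\ x = t *: delta_mx 0 i].

Notation star R n := (set_type (@star_set R n)).

Definition homeo (T : topologicalType) (f : T -> T) : Prop :=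
  continuous f /\
  exists g : T -> T, [/\ cancel f g, cancel g f & continuous g].

Definition homeo_subgroup (T : topologicalType) (G : set (T -> T)) : Prop :=
  [/\ (forall f, G f -> homeo f),
      G id,
      (forall f g, G f -> G g -> G (f \o g)) &
      (forall f, G f -> exists2 g, G g & cancel f g /\ cancel g f)].

Definition Homeo (T : topologicalType) : set (T -> T) := [set f | homeo f].

Definition invariant (T : topologicalType) (G : set (T -> T)) (Y : set T) : Prop :=
  Y !=set0 /\ (forall g y, G g -> Y y -> Y (g y)).

Definition has_chain (T : topologicalType) (G : set (T -> T)) (m : nat) : Prop :=
  exists Y : nat -> set T,
    [/\ (forall i, (i <= m)%N -> closed (Y i) /\ invariant G (Y i)),
        (forall i, (i < m)%N -> Y i `<` Y i.+1) &
        Y m = setT].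

(* h(G,T) >= k, where h is the supremum of the lengths of such chains. *)
Definition height_ge (T : topologicalType) (G : set (T -> T)) (k : nat) : Prop :=
  exists m, (k <= m)%N /\ has_chain G m.

Definition height_eq (T : topologicalType) (G : set (T -> T)) (k : nat) : Prop :=
  height_ge G k /\ (forall m, has_chain G m -> (m <= k)%N).

(* Main.v *)
Require Import Defs.
From HB Require Import structures.
From mathcomp Require Import all_boot all_order all_algebra.
From mathcomp Require Import all_classical all_reals all_analysis.
Import numFieldNormedType.Exports.
From mathcomp Require Import ring lra.

Module Aux.
Set Implicit Arguments. Unset Strict Implicit. Unset Printing Implicit Defensive.
Import Order.TTheory GRing.Theory Num.Theory.
Local Open Scope classical_set_scope.
Local Open Scope ring_scope.

Section S.
Variables (R : realType) (n : nat).
Local Notation T := (star R n).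

Lemma open_star (U : set T) : open U <-> exists2 W : set 'rV[R]_n, open W & val @^-1` W = U.
Proof. split; case=> W oW <-; by exists W. Qed.

Lemma val_cont : continuous (val : T -> 'rV[R]_n).
Proof. exact: initial_continuous. Qed.

Lemma cont_into (X : topologicalType) (f : X -> T) : continuous (val \o f) -> continuous f.
Proof. move=> H; apply/continuousP => U /open_star [W oW <-].
by move/continuousP: H => /(_ W oW). Qed.
End S.

Section S.
Variables (R : realType) (n : nat).
Local Notation T := (star R n).

Definition cl (t : R) : R := Num.min (Num.max t 0) 1.
Definition ee (i : 'I_n) : 'rV[R]_n := delta_mx 0 i.

Lemma cl_id t : 0 <= t <= 1 -> cl t = t.
Proof. case/andP=> h0 h1; rewrite /cl (max_idPl h0) (min_idPl h1) //. Qed.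

Lemma cl_ge0 t : 0 <= cl t.
Proof. by rewrite /cl le_min le_max lexx orbT ler01. Qed.

Lemma cl_le1 t : cl t <= 1.
Proof. by rewrite /cl ge_min lexx orbT. Qed.

Lemma cl_cont : continuous cl.
Proof.
move=> x.
have := @continuous_min R R (fun t : R => Num.max t 0) (fun _ => 1) x; apply; last exact: cvg_cst.
have := @continuous_max R R (fun t : R => t) (fun _ => 0) x; apply; [exact: cvg_id| exact: cvg_cst].
Qed.

Lemma arm_mem i t : cl t *: ee i \in @star_set R n.
Proof. apply/mem_set; exists i, (cl t); split => //; by rewrite cl_ge0 cl_le1. Qed.

Definition arm i t : T := exist _ (cl t *: ee i) (arm_mem i t).

Lemma armE i t : val (arm i t) = cl t *: ee i.
Proof. by []. Qed.

Lemma arm_coord i t k : val (arm i t) 0 k = if k == i then cl t else 0.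
Proof. rewrite armE !mxE eqxx /=; case: (k == i); by rewrite ?mulr1 ?mulr0. Qed.

Lemma decomp (x : T) : exists i t, 0 <= t <= 1 /\ x = arm i t.
Proof.
case: x => v hv; have := set_mem hv => -[i [t [ht E]]].
exists i, t; split => //; apply: val_inj => /=; by rewrite cl_id.
Qed.

Lemma arm_cl i t : arm i (cl t) = arm i t.
Proof. apply: val_inj; by rewrite /= cl_id // cl_ge0 cl_le1. Qed.

Lemma arm0 i j : arm i 0 = arm j 0.
Proof. apply: val_inj; rewrite /= cl_id ?lexx ?ler01 //; by rewrite !scale0r. Qed.

Lemma arm_eq i j t s : arm i t = arm j s -> 0 < cl t -> i = j /\ cl t = cl s.
Proof.
move=> E ht.
have := congr1 (fun x : T => val x 0 i) E; rewrite !arm_coord eqxx.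
case: eqP => [->//|_ ht0]; by move: ht; rewrite ht0 ltxx.
Qed.

Lemma arm_cont i : continuous (arm i).
Proof.
apply: cont_into => x /=.
apply: (@continuousZr_tmp _ _ _ cl (ee i) x); exact: cl_cont.
Qed.

End S.

Section S.
Variables (R : realType) (n : nat).
Local Notation T := (star R n).
Local Notation arm := (@arm R n).

Definition sep (x a b : T) := exists U V : set T,
  [/\ open U, open V, U `&` V = set0, (forall z, z <> x -> U z \/ V z) & U a /\ V b].

Lemma sep_transport (f g : T -> T) x a b : continuous g -> cancel f g -> cancel g f ->
  sep x a b -> sep (f x) (f a) (f b).
Proof.
move=> cg fg gf [U [V [oU oV UV cov [Ua Vb]]]].
exists (g @^-1` U), (g @^-1` V); split.
- by move/continuousP: cg; apply.
- by move/continuousP: cg; apply.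
- apply/seteqP; split => // z [/= Uz Vz].
  by have : (U `&` V) (g z) by []; rewrite UV.
- move=> z zx; apply: cov => gzx; apply: zx; by rewrite -gzx gf.
- by rewrite /= !fg.
Qed.

Lemma open_separated (U V : set T) : open U -> open V -> U `&` V = set0 -> separated U V.
Proof.
move=> oU oV UV; split; apply/seteqP; split => // x [].
- move=> cUx Vx; have [y [Uy Vy]] := cUx V (open_nbhs_nbhs (conj oV Vx)).
  by have : (U `&` V) y by []; rewrite UV.
- move=> Ux cVx; have [y [Vy Uy]] := cVx U (open_nbhs_nbhs (conj oU Ux)).
  by have : (U `&` V) y by []; rewrite UV.
Qed.

Lemma sep_conn x a b : sep x a b -> exists U : set T, [/\ U a, ~ U b &
  forall C p q, connected C -> ~ C x -> C p -> C q -> U p -> U q].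
Proof.
move=> [U [V [oU oV UV cov [Ua Vb]]]]; exists U; split => //.
- by move=> Ub; have : (U `&` V) b by []; rewrite UV.
- move=> C p q cC Cx Cp Cq Up.
  have sub : C `<=` U `|` V by move=> z Cz; apply: cov => zx; apply: Cx; rewrite -zx.
  case: (connected_subset (open_separated oU oV UV) sub cC) => CS; first exact: CS.
  have : (U `&` V) p by split => //; apply: CS.
  by rewrite UV.
Qed.

Definition seg i (u v : R) : set T := arm i @` [set r | u <= r <= v].

Lemma seg_conn i u v : connected (seg i u v).
Proof.
apply: connected_continuous_connected; last exact/continuous_subspaceT/arm_cont.
apply/connected_intervalP => x y /andP[ux _] /andP[_ yv] z /andP[xz zy].
apply/andP; split; [exact: le_trans ux xz|exact: le_trans zy yv].
Qed.

Lemma seg_mem i u v r : u <= r <= v -> seg i u v (arm i r).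
Proof. by move=> h; exists r. Qed.

Lemma no_sep_inner i t j s k r : 0 < t <= 1 -> 0 <= s <= 1 -> 0 <= r <= 1 ->
  (j != i \/ s < t) -> (k != i \/ r < t) -> ~ sep (arm i t) (arm j s) (arm k r).
Proof.
move=> ht hs hr hj hk /sep_conn [U [Ua Ub H]].
have clt : cl t = t by rewrite cl_id // (ltW (proj1 (andP ht))) (proj2 (andP ht)).
have avoid : forall m w, 0 <= w <= 1 -> (m != i \/ w < t) -> ~ seg m 0 w (arm i t).
  move=> m w hw hm [r' /andP[r0 rw] E].
  have t0 : 0 < cl t by rewrite clt; case/andP: ht.
  have [im ctr] := arm_eq (esym E) t0.
  move: ctr; rewrite clt cl_id; last by rewrite r0 (le_trans rw) //; case/andP: hw.
  move=> tr; case: hm => [/eqP|]; first by rewrite im.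
  by rewrite tr => /(lt_le_trans)/(_ rw); rewrite ltxx.
apply: Ub.
have U0 : U (arm k 0).
  rewrite (@arm0 R n k j).
  apply: (H (seg j 0 s) (arm j s)) => //.
  - exact: seg_conn.
  - exact: avoid.
  - by apply: seg_mem; case/andP: hs => h0 _; rewrite lexx h0.
  - by apply: seg_mem; case/andP: hs => h0 _; rewrite lexx h0.
apply: (H (seg k 0 r) (arm k 0)) => //.
- exact: seg_conn.
- exact: avoid.
- by apply: seg_mem; case/andP: hr => h0 _; rewrite lexx h0.
- by apply: seg_mem; case/andP: hr => h0 _; rewrite lexx h0.
Qed.

Lemma no_sep_outer i t s r : 0 < t -> t < s <= 1 -> t < r <= 1 ->
  ~ sep (arm i t) (arm i s) (arm i r).
Proof.
move=> t0 /andP[ts s1] /andP[tr r1] /sep_conn [U [Ua Ub H]].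
have tm : t < Num.min s r by rewrite lt_min ts tr.
have clt : cl t = t by rewrite cl_id // (ltW t0) (ltW (lt_le_trans ts s1)).
apply: Ub; apply: (H (seg i (Num.min s r) 1) (arm i s)) => //.
- exact: seg_conn.
- move=> [w /andP[mw w1] E].
  have t0' : 0 < cl t by rewrite clt.
  have [_ ctr] := arm_eq (esym E) t0'.
  move: ctr; rewrite clt cl_id; last by rewrite w1 andbT; apply: ltW; apply: lt_trans t0 (lt_le_trans tm mw).
  by move=> tw; move: (lt_le_trans tm mw); rewrite tw ltxx.
- by apply: seg_mem; rewrite s1 ge_min lexx.
- by apply: seg_mem; rewrite r1 ge_min lexx orbT.
Qed.

Lemma open_gtc i t : open (val @^-1` [set y : 'rV[R]_n | t < y 0 i] : set T).
Proof.
apply/open_star; exists [set y : 'rV[R]_n | t < y 0 i] => //.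
exact: (proj1 (continuousP _) (@coord_continuous R 1 n 0 i) _ (@open_gt _ t)).
Qed.

Lemma open_ltc i t : open (val @^-1` [set y : 'rV[R]_n | y 0 i < t] : set T).
Proof.
apply/open_star; exists [set y : 'rV[R]_n | y 0 i < t] => //.
exact: (proj1 (continuousP _) (@coord_continuous R 1 n 0 i) _ (@open_lt _ t)).
Qed.

Lemma sep_mid i t : 0 < t < 1 -> sep (arm i t) (arm i 1) (arm i 0).
Proof.
move=> /andP[t0 t1].
exists (val @^-1` [set y : 'rV[R]_n | t < y 0 i]), (val @^-1` [set y : 'rV[R]_n | y 0 i < t]).
split; [exact: open_gtc|exact: open_ltc| | |].
- by apply/seteqP; split => // z [/= h1 h2]; move: (lt_trans h1 h2); rewrite ltxx.
- move=> z zx; have [j [s [hs E]]] := decomp z; rewrite E in zx *; rewrite /= !arm_coord.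
  case: eqP => [ji|_]; last by right.
  rewrite cl_id //; case: (ltgtP t s) => [|?|ts]; [by left|by right|].
  by exfalso; apply: zx; rewrite ji ts.
- by rewrite /= !arm_coord eqxx !cl_id ?lexx ?ler01.
Qed.

Lemma sep_origin j k : j != k -> sep (arm j 0) (arm j 1) (arm k 1).
Proof.
move=> jk.
exists (val @^-1` [set y : 'rV[R]_n | 0 < y 0 j]),
  (\bigcup_(l in [set l | l != j]) val @^-1` [set y : 'rV[R]_n | 0 < y 0 l]).
split; [exact: open_gtc| apply: bigcup_open => l _; exact: open_gtc | | |].
- apply/seteqP; split => // z [/= h1 [l /= lj h2]].
  have [m [s [hs E]]] := decomp z; move: h1 h2; rewrite E !arm_coord.
  case: (eqVneq j m) => [jm|jm]; last by rewrite ltxx.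
  by rewrite -jm (negbTE lj) ltxx.
- move=> z zx; have [m [s [hs E]]] := decomp z.
  have s0 : 0 < s.
    rewrite lt_neqAle; case/andP: hs => -> _; rewrite andbT; apply/eqP => s0.
    by apply: zx; rewrite E -s0 (@arm0 R n m j).
  have cs : cl s = s by rewrite cl_id.
  case: (eqVneq m j) => [mj|mj]; [left|right].
  + by rewrite /= E arm_coord mj eqxx cs.
  + by exists m => //=; rewrite E arm_coord eqxx cs.
- split; first by rewrite /= arm_coord eqxx cl_id ?lexx ?ler01.
  exists k; first by rewrite /= eq_sym.
  by rewrite /= arm_coord eqxx cl_id ?lexx ?ler01.
Qed.

End S.

Section S.
Variables (R : realType) (n : nat).
Local Notation T := (star R n).
Local Notation arm := (@arm R n).

Lemma homeo_inv (f : T -> T) : homeo f -> exists g : T -> T,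
  [/\ homeo g, cancel f g & cancel g f].
Proof.
move=> [cf [g [fg gf cg]]]; exists g; split => //; split => //; by exists f.
Qed.

Lemma homeo_sep (f : T -> T) x a b : homeo f -> sep x a b -> sep (f x) (f a) (f b).
Proof. move=> [cf [g [fg gf cg]]]; exact: (@sep_transport R n f g). Qed.

Lemma arm_neq i j t s : 0 < cl t -> cl t != cl s -> arm i t <> arm j s.
Proof. by move=> t0 ne /arm_eq /(_ t0) [_ E]; move: ne; rewrite E eqxx. Qed.

Lemma cl0 : cl 0 = 0 :> R.
Proof. by rewrite cl_id // lexx ler01. Qed.
Lemma cl1 : cl 1 = 1 :> R.
Proof. by rewrite cl_id // lexx ler01. Qed.

Lemma endpoint_nocut i a b : a <> arm i 1 -> b <> arm i 1 -> ~ sep (arm i 1) a b.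
Proof.
move=> ha hb.
have [j [s [hs Ea]]] := decomp a; have [k [r [hr Eb]]] := decomp b.
rewrite Ea Eb; apply: no_sep_inner => //; first by rewrite ltr01 lexx.
- case: (eqVneq j i) => [ji|]; [right|by left].
  rewrite lt_neqAle; case/andP: hs => _ ->; rewrite andbT; apply/eqP => s1.
  by apply: ha; rewrite Ea ji s1.
- case: (eqVneq k i) => [ki|]; [right|by left].
  rewrite lt_neqAle; case/andP: hr => _ ->; rewrite andbT; apply/eqP => r1.
  by apply: hb; rewrite Eb ki r1.
Qed.

Lemma cut_nonend (hn : forall i : 'I_n, exists i' : 'I_n, i' != i) (x : T) :
  (forall j, x <> arm j 1) -> exists a b, [/\ a <> x, b <> x & sep x a b].
Proof.
move=> hx; have [i [t [ht Ex]]] := decomp x.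
have t1 : t != 1 by apply/eqP => t1; apply: (hx i); rewrite Ex t1.
have [t0|t0] := eqVneq t 0.
- have [i' ii'] := hn i.
  exists (arm i 1), (arm i' 1); rewrite Ex t0; split.
  + by apply: arm_neq; rewrite cl1 ?cl0 ?ltr01 ?oner_eq0.
  + by apply: arm_neq; rewrite cl1 ?cl0 ?ltr01 ?oner_eq0.
  + by apply: sep_origin; rewrite eq_sym.
- have tpos : 0 < t by rewrite lt_neqAle eq_sym t0; case/andP: ht.
  have tlt : t < 1 by rewrite lt_neqAle t1; case/andP: ht.
  have ct : cl t = t by rewrite cl_id.
  exists (arm i 1), (arm i 0); rewrite Ex; split.
  + by apply: arm_neq; rewrite cl1 ?ct ?ltr01 // eq_sym.
  + by move=> E; apply: (@arm_neq i i t 0); rewrite ?ct ?cl0.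
  + by apply: sep_mid; rewrite tpos tlt.
Qed.

Lemma homeo_end (hn : forall i : 'I_n, exists i' : 'I_n, i' != i) (f : T -> T) i :
  homeo f -> exists j, f (arm i 1) = arm j 1.
Proof.
move=> hf; apply: contrapT => /forallNP hx.
have [a [b [ha hb sab]]] := cut_nonend hn hx.
have [g [hg fg gf]] := homeo_inv hf.
have := homeo_sep hg sab; rewrite fg.
apply: endpoint_nocut => E.
- by apply: ha; rewrite -E gf.
- by apply: hb; rewrite -E gf.
Qed.

Lemma homeo_origin (i0 i1 i2 : 'I_n) (f : T -> T) :
  i0 != i1 -> i0 != i2 -> i1 != i2 -> homeo f -> f (arm i0 0) = arm i0 0.
Proof.
move=> h01 h02 h12 hf; apply: contrapT => hy.
have [g [hg fg gf]] := homeo_inv hf.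
have [i [t [ht Ey]]] := decomp (f (arm i0 0)).
have t0 : t != 0 by apply/eqP => t0; apply: hy; rewrite Ey t0 (@arm0 R n i i0).
have tpos : 0 < t by rewrite lt_neqAle eq_sym t0; case/andP: ht.
have ct : cl t = t by rewrite cl_id.
pose inner (p : T) := exists m s, [/\ 0 <= s <= 1, p = arm m s & (m != i \/ s < t)].
have Lout : forall p, ~ inner p -> p <> arm i t -> exists s, t < s <= 1 /\ p = arm i s.
  move=> p np py; have [m [s [hs Ep]]] := decomp p.
  case: (eqVneq m i) => [mi|mi]; last by exfalso; apply: np; exists m, s; split => //; left.
  case: (ltP s t) => st; first by exfalso; apply: np; exists m, s; split => //; right.
  exists s; split; last by rewrite Ep mi.
  case/andP: hs => _ ->; rewrite andbT lt_neqAle st andbT.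
  by apply/eqP => ts; apply: py; rewrite Ep mi ts.
pose p (k : 'I_n) := f (arm k 1).
have py : forall k, p k <> arm i t.
  move=> k E; rewrite -Ey in E; have := congr1 g E; rewrite !fg.
  by apply: arm_neq; rewrite cl1 ?cl0 ?ltr01 ?oner_eq0.
have psep : forall j k, j != k -> sep (arm i t) (p j) (p k).
  move=> j k jk; rewrite -Ey (@arm0 R n i0 j); exact: (homeo_sep hf (@sep_origin R n j k jk)).
have key : forall j k, j != k -> (inner (p j) <-> inner (p k)) -> False.
  move=> j k jk [h1 h2].
  case: (pselect (inner (p j))) => hj.
  - have [m [s [hs Es hm]]] := hj; have [m' [s' [hs' Es' hm']]] := h1 hj.
    have := psep j k jk; rewrite Es Es'; apply: no_sep_inner => //.
    by rewrite tpos; case/andP: ht.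
  - have hk : ~ inner (p k) by move=> /h2.
    have [s [hs Es]] := Lout _ hj (py j); have [s' [hs' Es']] := Lout _ hk (py k).
    have := psep j k jk; rewrite Es Es'; exact: no_sep_outer.
case: (pselect (inner (p i0))) => a0; case: (pselect (inner (p i1))) => a1;
  case: (pselect (inner (p i2))) => a2.
all: first [ by apply: (key i0 i1 h01); split
           | by apply: (key i0 i2 h02); split
           | by apply: (key i1 i2 h12); split ].
Qed.

End S.

Section S.
Variables (R : realType) (n : nat).
Local Notation T := (star R n).
Local Notation arm := (@arm R n).
Local Notation V := 'rV[R]_n.
Local Notation ee := (@ee R n).

Definition slift (F : V -> V) (HF : forall y, star_set y -> star_set (F y)) (z : T) : T :=
  exist _ (F (val z)) (mem_set (HF _ (set_mem (valP z)))).

Lemma slift_val F HF z : val (@slift F HF z) = F (val z).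
Proof. by []. Qed.

Lemma slift_cont F HF : continuous F -> continuous (@slift F HF).
Proof.
move=> cF; apply: cont_into => z.
have -> : (val \o @slift F HF) = F \o val by [].
apply: continuous_comp; [exact: (@val_cont R n z)|exact: cF].
Qed.

Lemma slift_homeo (F G : V -> V) (HF : forall y, star_set y -> star_set (F y))
  (HG : forall y, star_set y -> star_set (G y)) : continuous F -> continuous G ->
  (forall y, G (F y) = y) -> (forall y, F (G y) = y) -> homeo (@slift F HF).
Proof.
move=> cF cG GF FG; split; first exact: slift_cont.
exists (@slift G HG); split; last exact: slift_cont.
- by move=> z; apply: val_inj; rewrite !slift_val GF.
- by move=> z; apply: val_inj; rewrite !slift_val FG.
Qed.

Lemma ee_coord i l : ee i 0 l = (l == i)%:R :> R.
Proof. by rewrite /ee mxE eqxx. Qed.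

Definition sw (i j : 'I_n) (y : V) : V := y + (y 0 j - y 0 i) *: ee i + (y 0 i - y 0 j) *: ee j.

Lemma sw_coord i j y l : i != j ->
  sw i j y 0 l = if l == i then y 0 j else if l == j then y 0 i else y 0 l.
Proof.
move=> ij; rewrite /sw !mxE eqxx /=.
case: (eqVneq l i) => [->|li]; first by rewrite (negbTE ij) /=; ring.
case: (eqVneq l j) => [->|lj] /=; ring.
Qed.

Lemma sw_same i y : sw i i y = y.
Proof. by rewrite /sw subrr !scale0r !addr0. Qed.

Lemma sw_invol i j y : sw i j (sw i j y) = y.
Proof.
case: (eqVneq i j) => [->|ij]; first by rewrite !sw_same.
apply/rowP => l; rewrite !sw_coord // (eq_sym j i) (negbTE ij) !eqxx.
case: (eqVneq l i) => [E|li]; first by rewrite E.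
by case: (eqVneq l j) => [E|lj] //; rewrite E.
Qed.

Lemma scee_coord (c : R) k l : (c *: ee k) 0 l = if l == k then c else 0.
Proof. by rewrite !mxE eqxx /=; case: (l == k); rewrite ?mulr1 ?mulr0. Qed.

Ltac brute := do 8? (case: eqP => [?|?]; try subst) => //.

Lemma sw_arm_i i j c : sw i j (c *: ee i) = c *: ee j.
Proof.
case: (eqVneq i j) => [<-|ij]; first by rewrite sw_same.
apply/rowP => l; rewrite sw_coord // !scee_coord; move: ij; brute.
Qed.

Lemma sw_arm_j i j c : sw i j (c *: ee j) = c *: ee i.
Proof.
case: (eqVneq i j) => [<-|ij]; first by rewrite sw_same.
apply/rowP => l; rewrite sw_coord // !scee_coord; move: ij; brute.
Qed.

Lemma sw_arm_o i j k c : k != i -> k != j -> sw i j (c *: ee k) = c *: ee k.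
Proof.
case: (eqVneq i j) => [<-|ij]; first by rewrite sw_same.
move=> ki kj; apply/rowP => l; rewrite sw_coord // !scee_coord; move: ij ki kj; brute.
Qed.

Lemma sw_star i j y : star_set y -> star_set (sw i j y).
Proof.
move=> [k [c [hc ->]]].
case: (eqVneq k i) => [->|ki]; first by rewrite sw_arm_i; exists j, c.
case: (eqVneq k j) => [->|kj]; first by rewrite sw_arm_j; exists i, c.
by rewrite sw_arm_o //; exists k, c.
Qed.

Lemma coordZ_cont (a : V -> R) (v : V) : continuous a -> continuous (fun y => a y *: v).
Proof. move=> ca y; exact: (@continuousZr_tmp _ _ _ a v y (ca y)). Qed.

Lemma coordB_cont i j : continuous (fun y : V => y 0 j - y 0 i).
Proof.
move=> y; have := @continuousB R R^o V (fun y => y 0 j) (fun y => y 0 i) y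
  (@coord_continuous R 1 n 0 j y) (@coord_continuous R 1 n 0 i y); exact.
Qed.

Lemma sw_cont i j : continuous (sw i j).
Proof.
move=> y; rewrite /sw.
have h1 := @coordZ_cont _ (ee i) (@coordB_cont i j) y.
have h2 := @coordZ_cont _ (ee j) (@coordB_cont j i) y.
have h0 : {for y, continuous (fun y : V => y)} by exact: cvg_id.
have h01 := @continuousD R V V (fun y => y) (fun y => (y 0 j - y 0 i) *: ee i) y h0 h1.
exact: (@continuousD R V V _ (fun y => (y 0 i - y 0 j) *: ee j) y h01 h2).
Qed.

Definition swap i j : T -> T := @slift (sw i j) (@sw_star i j).

Lemma swap_homeo i j : homeo (swap i j).
Proof. apply: (@slift_homeo (sw i j) (sw i j) (@sw_star i j) (@sw_star i j)); [exact: (@sw_cont i j)|exact: (@sw_cont i j)|exact: (@sw_invol i j)|exact: (@sw_invol i j)]. Qed.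

Lemma swap_arm i j t : swap i j (arm i t) = arm j t.
Proof. apply: val_inj; by rewrite slift_val !armE sw_arm_i. Qed.

End S.

Definition hh {R : realType} (s t r : R) : R :=
  if r <= s then r * (t / s) else t + (r - s) * ((1 - t) / (1 - s)).

Lemma fa (R : realType) (s t : R) (hs : 0 < s < 1) (ht : 0 < t < 1) : s * (t / s) = t /\ 0 < t / s.
Proof.
case/andP: hs => hs0 hs1; case/andP: ht => ht0 ht1.
split; first by rewrite mulrC divfK // gt_eqF.
by rewrite divr_gt0.
Qed.

Lemma fb (R : realType) (s t : R) (hs : 0 < s < 1) (ht : 0 < t < 1) : (1 - s) * ((1 - t) / (1 - s)) = 1 - t /\ 0 < (1 - t) / (1 - s).
Proof.
case/andP: hs => hs0 hs1; case/andP: ht => ht0 ht1.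
split; first by rewrite mulrC divfK // subr_eq0 eq_sym lt_eqF.
by rewrite divr_gt0 // subr_gt0.
Qed.

Section S.
Variables (R : realType) (s t : R) (hs : 0 < s < 1) (ht : 0 < t < 1).

Lemma hh_s : hh s t s = t.
Proof. by rewrite /hh lexx (proj1 (fa hs ht)). Qed.

Lemma hh_0 : hh s t 0 = 0.
Proof. by rewrite /hh (ltW (proj1 (andP hs))) mul0r. Qed.

Lemma hh_inv r : hh t s (hh s t r) = r.
Proof.
have [ea pa] := fa hs ht; have [eb pb] := fb hs ht.
have [ea' pa'] := fa ht hs; have [eb' pb'] := fb ht hs.
move: ea pa eb pb ea' pa' eb' pb'.
set a := t / s; set b := (1 - t) / (1 - s); set a' := s / t; set b' := (1 - s) / (1 - t).
move=> ea pa eb pb ea' pa' eb' pb'.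
case/andP: hs => hs0 hs1; case/andP: ht => ht0 ht1.
rewrite /hh -/a -/b -/a' -/b'.
have aa' : a * a' = 1 by nra.
have bb' : b * b' = 1 by nra.
case: (lerP r s) => rs.
- have -> : r * a <= t by nra.
  by rewrite -mulrA aa' mulr1.
- have -> : (t + (r - s) * b <= t) = false by apply/negbTE; rewrite -ltNge; nra.
  have -> : t + (r - s) * b - t = (r - s) * b by ring.
  by rewrite -mulrA bb' mulr1; ring.
Qed.

Lemma hh_range r : 0 <= r <= 1 -> 0 <= hh s t r <= 1.
Proof.
have [ea pa] := fa hs ht; have [eb pb] := fb hs ht.
move: ea pa eb pb; set a := t / s; set b := (1 - t) / (1 - s) => ea pa eb pb.
case/andP: hs => hs0 hs1; case/andP: ht => ht0 ht1.
move=> /andP[r0 r1]; rewrite /hh -/a -/b.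
case: (lerP r s) => rs; apply/andP; split; nra.
Qed.

Lemma lin_cont (c d : R) : continuous (fun r : R => c + r * d).
Proof.
move=> x.
have h1 : {for x, continuous (fun r : R => r * d)}.
  have := @continuousM R R (fun r : R => r) (fun _ => d) x (@cvg_id _ _) (cvg_cst d); exact.
have := @continuousD R R^o R (fun _ => c) (fun r : R => r * d) x (cvg_cst c) h1; exact.
Qed.

Lemma hh_cont : continuous (hh s t).
Proof.
have [ea pa] := fa hs ht; have [eb pb] := fb hs ht.
move: ea pa eb pb; set a := t / s; set b := (1 - t) / (1 - s) => ea pa eb pb.
case/andP: hs => hs0 hs1; case/andP: ht => ht0 ht1.
have c1 : continuous (fun r : R => 0 + r * a) by exact: lin_cont.
have c2 : continuous (fun r : R => (t - s * b) + r * b) by exact: lin_cont.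
have e2 : forall r, t + (r - s) * b = (t - s * b) + r * b by move=> r; ring.
have e1 : forall r, r * a = 0 + r * a by move=> r; ring.
have key : s * (1 - s) * (a - b) = t - s.
  transitivity ((1 - s) * (s * a) - s * ((1 - s) * b)); first ring.
  by rewrite ea eb; ring.
have ps : 0 < s * (1 - s) by rewrite mulr_gt0 // subr_gt0.
case: (lerP s t) => st.
- have hab : 0 <= a - b.
    by rewrite -(pmulr_rge0 _ ps) key subr_ge0.
  have -> : hh s t = (fun r => 0 + r * a) \min (fun r => (t - s * b) + r * b).
    apply/funext => r; rewrite /hh -/a -/b /= -e1 -e2.
    case: (lerP r s) => rs.
    + by rewrite min_l //; nra.
    + by rewrite min_r //; nra.
  move=> x; have := @continuous_min R R _ _ x (c1 x) (c2 x); exact.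
- have hab : a - b < 0.
    by rewrite -(pmulr_rlt0 _ ps) key subr_lt0.
  have -> : hh s t = (fun r => 0 + r * a) \max (fun r => (t - s * b) + r * b).
    apply/funext => r; rewrite /hh -/a -/b /= -e1 -e2.
    case: (lerP r s) => rs.
    + by rewrite max_l //; nra.
    + by rewrite max_r //; nra.
  move=> x; have := @continuous_max R R _ _ x (c1 x) (c2 x); exact.
Qed.

End S.

Section S.
Variables (R : realType) (n : nat).
Local Notation T := (star R n).
Local Notation arm := (@arm R n).
Local Notation V := 'rV[R]_n.
Local Notation ee := (@ee R n).

Definition mv (s t : R) i (y : V) : V := y + (hh s t (y 0 i) - y 0 i) *: ee i.

Lemma mv_coord s t i y : mv s t i y 0 i = hh s t (y 0 i).
Proof. by rewrite /mv !mxE !eqxx /= mulr1 addrC subrK. Qed.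

Lemma mv_inv s t i y : 0 < s < 1 -> 0 < t < 1 -> mv t s i (mv s t i y) = y.
Proof.
move=> hs ht; rewrite {1}/mv mv_coord hh_inv // /mv -addrA -scalerDl.
by rewrite addrA subrK subrr scale0r addr0.
Qed.

Lemma mv_arm_o s t i k c : 0 < s < 1 -> 0 < t < 1 -> k != i -> mv s t i (c *: ee k) = c *: ee k.
Proof.
move=> hs ht ki; rewrite /mv scee_coord eq_sym (negbTE ki) hh_0 // subrr scale0r addr0 //.
Qed.

Lemma mv_arm_i s t i c : mv s t i (c *: ee i) = hh s t c *: ee i.
Proof. by rewrite /mv scee_coord eqxx addrC -scalerDl subrK. Qed.

Lemma mv_star (s t : R) (i : 'I_n) (hs : 0 < s < 1) (ht : 0 < t < 1) y :
  star_set y -> star_set (mv s t i y).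
Proof.
move=> [k [c [hc ->]]].
case: (eqVneq k i) => [->|ki].
- rewrite mv_arm_i; exists i, (hh s t c); split => //; exact: hh_range.
- by rewrite mv_arm_o //; exists k, c.
Qed.

Lemma mv_cont (s t : R) (i : 'I_n) (hs : 0 < s < 1) (ht : 0 < t < 1) : continuous (mv s t i).
Proof.
have cc : continuous (fun y : V => y 0 i) := @coord_continuous R 1 n 0 i.
have ch : continuous (fun y : V => hh s t (y 0 i) - y 0 i).
  move=> y.
  have h1 : {for y, continuous (fun y : V => hh s t (y 0 i))}.
    apply: continuous_comp; [exact: cc|exact: hh_cont].
  have := @continuousB R R^o V (fun y => hh s t (y 0 i)) (fun y => y 0 i) y h1 (cc y); exact.
move=> y.
have h0 : {for y, continuous (fun y : V => y)} by exact: cvg_id.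
have h1 := @coordZ_cont R n _ (ee i) ch y.
exact: (@continuousD R V V (fun y => y) _ y h0 h1).
Qed.

Definition mvh (s t : R) (i : 'I_n) (hs : 0 < s < 1) (ht : 0 < t < 1) : T -> T :=
  @slift R n (mv s t i) (mv_star i hs ht).

Lemma move_homeo (s t : R) (i : 'I_n) (hs : 0 < s < 1) (ht : 0 < t < 1) : homeo (mvh i hs ht).
Proof.
apply: (@slift_homeo R n (mv s t i) (mv t s i) (mv_star i hs ht) (mv_star i ht hs)).
- exact: mv_cont.
- exact: mv_cont.
- by move=> y; rewrite mv_inv.
- by move=> y; rewrite mv_inv.
Qed.

Lemma move_arm (s t : R) (i : 'I_n) (hs : 0 < s < 1) (ht : 0 < t < 1) : mvh i hs ht (arm i s) = arm i t.
Proof.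
apply: val_inj; rewrite slift_val !armE.
have [hs0 hs1] := andP hs; have [ht0 ht1] := andP ht.
rewrite !cl_id ?(ltW hs0) ?(ltW hs1) ?(ltW ht0) ?(ltW ht1) //.
by rewrite mv_arm_i hh_s.
Qed.

End S.

Lemma open_near (R : realType) (O : set R) s : open O -> O s -> 0 <= s <= 1 ->
  exists r, 0 < r < 1 /\ O r.
Proof.
move=> oO Os /andP[s0 s1].
have /nbhs_ballP [e e0 sub] : nbhs s O by exact: open_nbhs_nbhs.
pose d := Num.min 1 e.
have d0 : 0 < d by rewrite lt_min ltr01 e0.
have d1 : d <= 1 by rewrite ge_min lexx.
have de : d <= e by rewrite ge_min lexx orbT.
pose r := (1 - d) * s + d / 2.
exists r; split; first by apply/andP; split; rewrite /r; nra.
apply: sub; rewrite -ball_normE /=; move: e0 => /= e0.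
have h1 : s - r = d * (s - 1/2) by rewrite /r; field.
rewrite h1 normrM (gtr0_norm d0).
have : `|s - 1/2| <= 1/2 by rewrite ler_norml; apply/andP; split; lra.
nra.
Qed.

Section Main.
Variables (R : realType) (n : nat) (h3 : (3 <= n)%N).
Local Notation T := (star R n).
Local Notation arm := (@arm R n).
Local Notation V := 'rV[R]_n.

Let h0 : (0 < n)%N. Proof. by apply: leq_trans h3. Qed.
Let h1 : (1 < n)%N. Proof. by apply: leq_trans h3. Qed.
Let h2 : (2 < n)%N. Proof. by []. Qed.
Let i0 : 'I_n := Ordinal h0.
Let i1 : 'I_n := Ordinal h1.
Let i2 : 'I_n := Ordinal h2.
Let d01 : i0 != i1. Proof. by []. Qed.
Let d02 : i0 != i2. Proof. by []. Qed.
Let d12 : i1 != i2. Proof. by []. Qed.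
Let hn : forall i : 'I_n, exists i' : 'I_n, i' != i.
Proof.
move=> i; case: (eqVneq i i0) => [->|ne]; first by exists i1; rewrite eq_sym.
by exists i0; rewrite eq_sym.
Qed.

Let o : T := arm i0 0.

Lemma origin_fixed (f : T -> T) : homeo f -> f o = o.
Proof. exact: homeo_origin d01 d02 d12. Qed.

Lemma closed_coord (k : 'I_n) (c : R) : closed [set y : V | y 0 k = c].
Proof.
apply: (@preimage_closed _ _ (fun y : V => y 0 k) [set x | x = c]).
  by move=> x _; exact: (@coord_continuous R 1 n 0 k x).
exact: closed_eq.
Qed.

Lemma closed_pre (D : set V) : closed D -> closed (val @^-1` D : set T).
Proof.
apply: preimage_closed => x _; exact: (@val_cont R n x).
Qed.

Definition Y0 : set T := [set o].
Definition Y1 : set T := [set z | z = o \/ exists j, z = arm j 1].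

Lemma Y0E : Y0 = val @^-1` (\bigcap_(k in setT) [set y : V | y 0 k = 0]).
Proof.
apply/seteqP; split => z.
- move=> -> k _ /=; rewrite /o arm_coord cl0; by case: ifP.
- move=> H; have [j [s [hs E]]] := decomp z; rewrite E in H *.
  have := H j I; rewrite /= arm_coord eqxx => cs.
  by rewrite /Y0 /= -arm_cl cs (@arm0 R n j i0).
Qed.

Lemma Y1E : Y1 = val @^-1` (\bigcap_(k in setT)
   ([set y : V | y 0 k = 0] `|` [set y : V | y 0 k = 1])).
Proof.
apply/seteqP; split => z.
- move=> [->|[j ->]] k _ /=; rewrite /o arm_coord ?cl0 ?cl1; case: ifP; by [left|right|left].
- move=> H; have [j [s [hs E]]] := decomp z; rewrite E in H *.
  have := H j I; rewrite /= arm_coord eqxx => -[] cs; rewrite /Y1 /= -arm_cl cs.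
  + by left; rewrite (@arm0 R n j i0).
  + by right; exists j.
Qed.

Lemma closed_Y0 : closed Y0.
Proof. rewrite Y0E; apply: closed_pre; apply: closed_bigI => k _; exact: closed_coord. Qed.

Lemma closed_Y1 : closed Y1.
Proof.
rewrite Y1E; apply: closed_pre; apply: closed_bigI => k _.
apply: closedU; exact: closed_coord.
Qed.

Lemma Y1_inv (f : T -> T) : homeo f -> forall z, Y1 z -> Y1 (f z).
Proof.
move=> hf z [->|[j ->]]; first by left; exact: origin_fixed.
by right; exact: (@homeo_end R n hn f j hf).
Qed.

Lemma clh : cl (2^-1 : R) = 2^-1.
Proof. by rewrite cl_id //; apply/andP; split; lra. Qed.

Lemma half_bounds : (0 : R) < 2^-1 < (1 : R).
Proof. by apply/andP; split; lra. Qed.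

Lemma part1 (G : set (T -> T)) : homeo_subgroup G -> height_ge G 2.
Proof.
case=> hG _ _ _; exists 2%N; split => //.
exists (fun k => if k == 0%N then Y0 else if k == 1%N then Y1 else setT); split => //.
- move=> k; case: k => [|[|[|k]]] // _ /=.
  + split; first exact: closed_Y0.
    split; first by exists o.
    by move=> g y Gg ->; exact: origin_fixed (hG _ Gg).
  + split; first exact: closed_Y1.
    split; first by exists o; left.
    move=> g y Gg; exact: (@Y1_inv g (hG g Gg) y).
  + split; first exact: closedT.
    by split; first by exists o.
- move=> k; case: k => [|[|k]] // _ /=.
  + split; first by move=> z zo; left; exact: zo.
    move=> sub; have := sub (arm i0 1) (or_intror (ex_intro _ i0 erefl)).
    by apply: arm_neq; rewrite cl1 ?cl0 ?ltr01 ?oner_eq0.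
  + split => //; move=> sub; have := sub (arm i0 (2^-1)) I.
    have [hh0 hh1] := andP half_bounds.
    case=> [|[j]]; apply: arm_neq; rewrite clh ?cl0 ?cl1 //.
    all: try by rewrite lt_eqF.
    all: try by rewrite gt_eqF.
Qed.

Lemma Homeo_subgroup : homeo_subgroup (@Homeo T).
Proof.
split.
- by [].
- split; first by move=> x; exact: cvg_id.
  by exists id; split => //; move=> x; exact: cvg_id.
- move=> f g [cf [f' [ff' f'f cf']]] [cg [g' [gg' g'g cg']]]; split.
  + move=> x; apply: continuous_comp; [exact: cg|exact: cf].
  + exists (g' \o f'); split.
    * by move=> x /=; rewrite ff' gg'.
    * by move=> x /=; rewrite g'g f'f.
    * move=> x; apply: continuous_comp; [exact: cf'|exact: cg'].
- move=> f hf; have [g [hg fg gf]] := homeo_inv hf; by exists g.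
Qed.

Lemma interior_all (Y : set T) (i : 'I_n) (s : R) : closed Y -> Defs.invariant (@Homeo T) Y ->
  0 < s < 1 -> Y (arm i s) -> forall z, Y z.
Proof.
move=> cY [_ inv] hs Ys.
have all_int : forall k r, 0 < r < 1 -> Y (arm k r).
  move=> k r hr.
  have y1 : Y (mvh i hs hr (arm i s)) by apply: inv => //; exact: move_homeo.
  rewrite move_arm in y1.
  have y2 : Y (swap i k (arm i r)) by apply: inv => //; exact: swap_homeo.
  by rewrite swap_arm in y2.
move=> z; apply: contrapT => nz; have [k [r [hr E]]] := decomp z.
have oO : open (arm k @^-1` (~` Y)).
  exact: (proj1 (continuousP _) (@arm_cont R n k) _ (closed_openC cY)).
have Or : (arm k @^-1` (~` Y)) r by rewrite /= -E.
have [r' [hr' Or']] := open_near oO Or hr.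
by apply: Or'; exact: all_int.
Qed.

Lemma classify (Y : set T) : closed Y -> Defs.invariant (@Homeo T) Y -> ~ (forall z, Y z) ->
  forall z, Y z -> z = o \/ exists j, z = arm j 1.
Proof.
move=> cY iY nf z Yz; have [j [s [hs E]]] := decomp z.
have [s0|s0] := eqVneq s 0; first by left; rewrite E s0 /o (@arm0 R n j i0).
have [s1|s1] := eqVneq s 1; first by right; exists j; rewrite E s1.
exfalso; apply: nf; apply: (@interior_all Y j s) => //; last by rewrite -E.
case/andP: hs => h0' h1'; apply/andP; split.
- by rewrite lt_neqAle eq_sym s0.
- by rewrite lt_neqAle s1.
Qed.

Lemma saturate (Y : set T) (j k : 'I_n) : Defs.invariant (@Homeo T) Y -> Y (arm j 1) -> Y (arm k 1).
Proof.
move=> [_ inv] Yj; have := inv (swap j k) _ (@swap_homeo R n j k) Yj; by rewrite swap_arm.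
Qed.

Lemma part2 m : has_chain (@Homeo T) m -> (m <= 2)%N.
Proof.
move=> [Y [hY hlt hm]]; rewrite leqNgt; apply/negP => m3.
have c k : (k <= 2)%N -> closed (Y k) /\ Defs.invariant (@Homeo T) (Y k).
  move=> hk; apply: hY; apply: leq_trans hk _; exact: ltnW.
have [s01 n10] := hlt 0%N (leq_trans (isT : (1 <= 3)%N) m3).
have [s12 n21] := hlt 1%N (leq_trans (isT : (2 <= 3)%N) m3).
have [s23 n32] := hlt 2%N m3.
have nf2 : ~ (forall z, Y 2%N z) by move=> H; apply: n32 => z _; exact: H.
have nf1 : ~ (forall z, Y 1%N z) by move=> H; apply: nf2 => z; exact: s12.
have nf0 : ~ (forall z, Y 0%N z) by move=> H; apply: nf1 => z; exact: s01.
have wit : forall a b : set T, ~ (b `<=` a) -> exists w, b w /\ ~ a w.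
  move=> a b nba; apply: contrapT => H; apply: nba => z bz; apply: contrapT => nz.
  by apply: H; exists z.
have [w1 [Y1w1 nY0w1]] := wit _ _ n10.
have [w2 [Y2w2 nY1w2]] := wit _ _ n21.
have [c0 i0'] := c 0%N isT; have [c1 i1'] := c 1%N isT; have [c2 i2'] := c 2%N isT.
have [w0 Y0w0] := i0'.1.
have cl0' := classify c0 i0' nf0 Y0w0.
have cl1' := classify c1 i1' nf1 Y1w1.
have cl2' := classify c2 i2' nf2 Y2w2.
case: cl2' => [E2|[j2 E2]].
- case: cl1' => [E1|[j1 E1]]; first by apply: nY1w2; rewrite E2 -E1.
  case: cl0' => [E0|[j0 E0]].
  + by apply: nY1w2; rewrite E2 -E0; exact: s01.
  + by apply: nY0w1; rewrite E1; apply: (@saturate _ j0 j1 i0'); rewrite -E0.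
- case: cl1' => [E1|[j1 E1]].
  + case: cl0' => [E0|[j0 E0]]; first by apply: nY0w1; rewrite E1 -E0.
    apply: nY1w2; rewrite E2; apply: s01; apply: (@saturate _ j0 j2 i0'); by rewrite -E0.
  + by apply: nY1w2; rewrite E2; apply: (@saturate _ j1 j2 i1'); rewrite -E1.
Qed.

End Main.


End Aux.
Import Aux.

Theorem lemma4p1 (R : realType) (n : nat) : (3 <= n)%N ->
  (forall G : set (star R n -> star R n), homeo_subgroup G -> height_ge G 2) /\
  height_eq (@Homeo (star R n)) 2.
Proof.
move=> h3; split; first exact: (@part1 R n h3).
split; first exact: (@part1 R n h3 _ (@Homeo_subgroup R n)).
exact: (@part2 R n h3).
Qed.
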